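(* Let $G$ be a character-free complex linear algebraic group. Let $D,D'$ be infinite discrete subsets of $G$ such that the symmetric difference $(D\setminus D')\cup(D'\setminus D)$ is finite. Then $D$ is tame if and only if $D'$ is tame.
   Context: A complex linear algebraic group $G$ is character-free if every morphism of algebraic groups $G\to\mathbb{C}^*$ is trivial. An exhaustion function on $G$ is a continuous $\rho:G\to\mathbb{R}^+$ with all sublevel sets compact. An infinite discrete subset $D$ of a complex manifold $X$ is called tame if for every exhaustion function $\rho$ on $X$ and every map $\zeta:D\to\mathbb{R}^+$ there exists a biholomorphic self-map $\phi$ of $X$ with $\rho(\phi(x))\ge\zeta(x)$ for all $x\in D$. *)

(* Defs.v *)
From HB Require Import structures.
From mathcomp Require Import all_boot all_order all_algebra.
From mathcomp Require Import all_classical all_reals all_analysis.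
From mathcomp Require Import complex.
Import Order.TTheory GRing.Theory Num.Theory.
Import numFieldNormedType.Exports.
Local Open Scope ring_scope.
Local Open Scope classical_set_scope.

Set Implicit Arguments. Unset Strict Implicit. Unset Printing Implicit Defensive.

(* The complex numbers are R[i] for a realType R; complex n x n matrices,
   viewed as the normed C-vector space C^(n*n). *)
Definition Mx (R : realType) (n : nat) : normedModType R[i] := 'M[R[i]]_n.

Inductive is_polyfun (R : realType) (n : nat) : (Mx R n -> R[i]) -> Prop :=
| pf_cst (c : R[i]) : is_polyfun (fun _ => c)
| pf_coord (i j : 'I_n) : is_polyfun (fun A : Mx R n => (A : 'M[R[i]]_n) i j)
| pf_add f g : is_polyfun f -> is_polyfun g -> is_polyfun (fun A => f A + g A)
| pf_mul f g : is_polyfun f -> is_polyfun g -> is_polyfun (fun A => f A * g A).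

(* A complex linear algebraic group, realised as a Zariski-closed subgroup
   of GL_n(C) (every linear algebraic group is isomorphic to one). *)
Definition lin_alg_group (R : realType) (n : nat) (G : set (Mx R n)) : Prop :=
  (exists S : set (Mx R n -> R[i]),
      (forall p, S p -> is_polyfun p) /\
      G = [set A : Mx R n | \det (A : 'M[R[i]]_n) != 0 /\ forall p, S p -> p A = 0])
  /\ G (1%:M : 'M[R[i]]_n)
  /\ (forall A B : Mx R n, G A -> G B -> G ((A : 'M[R[i]]_n) *m B))
  /\ (forall A : Mx R n, G A -> G (invmx (A : 'M[R[i]]_n))).

(* Regular functions on G: restrictions of elements of C[x_ij, 1/det]. *)
Definition regular_on (R : realType) (n : nat) (G : set (Mx R n))
    (f : Mx R n -> R[i]) : Prop :=
  exists (p : Mx R n -> R[i]) (k : nat), is_polyfun p /\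
    forall A : Mx R n, G A -> f A = p A / (\det (A : 'M[R[i]]_n)) ^+ k.

Definition character (R : realType) (n : nat) (G : set (Mx R n))
    (chi : Mx R n -> R[i]) : Prop :=
  regular_on G chi /\ (forall A, G A -> chi A != 0) /\
  (forall A B : Mx R n, G A -> G B -> chi ((A : 'M[R[i]]_n) *m B) = chi A * chi B).

Definition character_free (R : realType) (n : nat) (G : set (Mx R n)) : Prop :=
  forall chi, character G chi -> forall A, G A -> chi A = 1.

Definition exhaustion (R : realType) (n : nat) (G : set (Mx R n))
    (rho : Mx R n -> R) : Prop :=
  {within G, continuous rho} /\ (forall x, G x -> 0 < rho x) /\
  forall c : R, compact (G `&` [set x | rho x <= c]).

(* Holomorphic map G -> Mx (G is a closed complex submanifold of the open set
   GL_n(C) of C^(n*n)): locally the restriction of a holomorphic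
   (= C-differentiable) map defined on an open subset of C^(n*n). *)
Definition holomorphic_on (R : realType) (n : nat) (G : set (Mx R n))
    (phi : Mx R n -> Mx R n) : Prop :=
  forall x, G x -> exists (U : set (Mx R n)) (F : Mx R n -> Mx R n),
    [/\ open U, U x, (forall y, U y -> differentiable F y) &
        (forall y, U y -> G y -> F y = phi y)].

Definition biholomorphic_self (R : realType) (n : nat) (G : set (Mx R n))
    (phi : Mx R n -> Mx R n) : Prop :=
  (forall x, G x -> G (phi x)) /\ holomorphic_on G phi /\
  exists psi : Mx R n -> Mx R n,
    [/\ forall x, G x -> G (psi x), holomorphic_on G psi,
        forall x, G x -> psi (phi x) = x & forall x, G x -> phi (psi x) = x].

(* Discrete subset of G (closed discrete: no accumulation point in G). *)
Definition discrete_in (R : realType) (n : nat) (G D : set (Mx R n)) : Prop :=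
  D `<=` G /\ forall x, G x -> exists U, nbhs x U /\ U `&` D `<=` [set x].

Definition tame (R : realType) (n : nat) (G D : set (Mx R n)) : Prop :=
  ~ finite_set D /\ discrete_in G D /\
  forall (rho : Mx R n -> R) (zeta : Mx R n -> R),
    exhaustion G rho -> (forall x, D x -> 0 < zeta x) ->
    exists phi, biholomorphic_self G phi /\ forall x, D x -> zeta x <= rho (phi x).

(* Main.v *)
Require Import Defs.
From HB Require Import structures.
From mathcomp Require Import all_boot all_order all_algebra.
From mathcomp Require Import all_classical all_reals all_analysis.
From mathcomp Require Import complex.
From mathcomp Require Import lra.
Import Order.TTheory GRing.Theory Num.Theory.
Import numFieldNormedType.Exports.
Local Open Scope ring_scope.
Local Open Scope classical_set_scope.
Set Implicit Arguments. Unset Strict Implicit. Unset Printing Implicit Defensive.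

Definition CC (R : realType) : numFieldType := R[i].
Lemma mx_cont (R : realType) (T : topologicalType) m k
  (f : T -> 'M[CC R]_(m,k)) x :
  (forall i j, {for x, continuous (fun y => f y i j)}) -> {for x, continuous f}.
Proof.
move=> Hc A [P HP sPA].
have : \forall y \near x, forall i j, P i j (f y i j).
  apply: filter_forall => i; apply: filter_forall => j.
  exact: (Hc i j (P i j) (HP i j)).
by apply: filterS => y Hy; apply: sPA.
Qed.

Lemma polyfun_sum (R : realType) n (I : Type) (r : seq I) (P : pred I)
  (F : I -> Mx R n -> R[i]) :
  (forall i, is_polyfun (F i)) -> is_polyfun (fun A => \sum_(i <- r | P i) F i A).
Proof.
move=> HF; elim: r => [|a r IH].
  by under eq_fun => A do rewrite big_nil; exact: pf_cst.
under eq_fun => A do rewrite big_cons.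
case: (P a); last exact: IH.
exact: pf_add.
Qed.

Lemma polyfun_prod (R : realType) n (I : Type) (r : seq I) (P : pred I)
  (F : I -> Mx R n -> R[i]) :
  (forall i, is_polyfun (F i)) -> is_polyfun (fun A => \prod_(i <- r | P i) F i A).
Proof.
move=> HF; elim: r => [|a r IH].
  by under eq_fun => A do rewrite big_nil; exact: pf_cst.
under eq_fun => A do rewrite big_cons.
case: (P a); last exact: IH.
exact: pf_mul.
Qed.

Lemma polyfun_det (R : realType) n m (M : Mx R n -> 'M[R[i]]_m) :
  (forall i j, is_polyfun (fun A => M A i j)) -> is_polyfun (fun A => \det (M A)).
Proof.
move=> HM; rewrite /determinant.
apply: polyfun_sum => s; apply: pf_mul; first exact: pf_cst.
by apply: polyfun_prod => i; exact: HM.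
Qed.

Lemma polyfun_cont (R : realType) n (f : Mx R n -> R[i]) :
  is_polyfun f -> continuous (f : Mx R n -> CC R).
Proof.
elim => [c|i j|f1 g _ IHf _ IHg|f1 g _ IHf _ IHg] x.
- exact: cst_continuous.
- exact: coord_continuous.
- exact: (continuousD (IHf x) (IHg x)).
- exact: (continuousM (IHf x) (IHg x)).
Qed.

Lemma det1 (R : realType) n (G : set (Mx R n)) :
  lin_alg_group G -> character_free G -> forall A : Mx R n, G A -> \det (A : 'M[R[i]]_n) = 1.
Proof.
move=> [[S [HS GE]] [G1 [GM GV]]] Hcf A GA.
apply: (Hcf (fun A : Mx R n => \det (A : 'M[R[i]]_n))) => //.
split; [|split].
- exists (fun A : Mx R n => \det (A : 'M[R[i]]_n)), 0%N; split.
    by apply: (polyfun_det (M := fun A : Mx R n => (A : 'M[R[i]]_n))) => i j; exact: pf_coord.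
  by move=> B _; rewrite expr0 divr1.
- by move=> B; rewrite GE => -[].
- by move=> B C _ _; rewrite det_mulmx.
Qed.

Lemma unit_of_G (R : realType) n (G : set (Mx R n)) (A : Mx R n) :
  lin_alg_group G -> G A -> (A : 'M[R[i]]_n) \in unitmx.
Proof.
move=> [[S [HS GE]] _]; rewrite GE => -[dA _].
by rewrite unitmxE unitfE.
Qed.

Lemma Lg_cont (R : realType) n (g : 'M[R[i]]_n) :
  continuous (fun x : Mx R n => (g *m (x : 'M[R[i]]_n) : Mx R n)).
Proof.
move=> x; apply: (mx_cont (R := R)) => i j.
have -> : (fun y : Mx R n => (g *m (y : 'M[R[i]]_n)) i j) =
          (fun y : Mx R n => \sum_k g i k * (y : 'M[R[i]]_n) k j).
  by apply: funext => y; rewrite mxE.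
apply: polyfun_cont; apply: polyfun_sum => k; apply: pf_mul; first exact: pf_cst.
exact: pf_coord.
Qed.

Lemma Lg_diff (R : realType) n (g : 'M[R[i]]_n) (x : Mx R n) :
  differentiable (fun x : Mx R n => (g *m (x : 'M[R[i]]_n) : Mx R n)) x.
Proof.
have := @linear_differentiable _ (Mx R n) (Mx R n) (mulmx g) x.
by apply; exact: Lg_cont.
Qed.

Lemma holo_post (R : realType) n (G : set (Mx R n)) (g : 'M[R[i]]_n) phi :
  holomorphic_on G phi ->
  holomorphic_on G (fun x => (g *m (phi x : 'M[R[i]]_n) : Mx R n)).
Proof.
move=> Hphi x Gx; have [U [F [oU Ux dF eF]]] := Hphi x Gx.
exists U, (fun y => (g *m (F y : 'M[R[i]]_n) : Mx R n)); split => //.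
- move=> y Uy.
  exact: (differentiable_comp (f := F) (g := fun x : Mx R n => (g *m (x : 'M[R[i]]_n) : Mx R n)) (dF y Uy) (Lg_diff g (F y))).
- by move=> y Uy Gy; rewrite eF.
Qed.

Lemma holo_pre (R : realType) n (G : set (Mx R n)) (h : 'M[R[i]]_n) psi :
  (forall x, G x -> G (h *m (x : 'M[R[i]]_n) : Mx R n)) ->
  holomorphic_on G psi ->
  holomorphic_on G (fun x => psi (h *m (x : 'M[R[i]]_n) : Mx R n)).
Proof.
move=> hG Hpsi x Gx; have [U [F [oU Ux dF eF]]] := Hpsi _ (hG x Gx).
exists ((fun x : Mx R n => (h *m (x : 'M[R[i]]_n) : Mx R n)) @^-1` U),
  (fun y => F (h *m (y : 'M[R[i]]_n) : Mx R n)); split => //.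
- by apply: open_comp => // y _; exact: Lg_cont.
- move=> y Uy.
  exact: (differentiable_comp (g := F) (f := fun x : Mx R n => (h *m (x : 'M[R[i]]_n) : Mx R n)) (Lg_diff h y) (dF _ Uy)).
- by move=> y Uy Gy; rewrite eF //; exact: hG.
Qed.

Lemma biholo_Lg (R : realType) n (G : set (Mx R n)) (g : Mx R n) phi :
  lin_alg_group G -> G g -> biholomorphic_self G phi ->
  biholomorphic_self G (fun x => ((g : 'M[R[i]]_n) *m (phi x : 'M[R[i]]_n) : Mx R n)).
Proof.
move=> HG Gg [phiG [hphi [psi [psiG hpsi psiphi phipsi]]]].
have gu := unit_of_G HG Gg.
have [_ [_ [GM GV]]] := HG.
split; [|split].
- by move=> x Gx; apply: GM => //; exact: phiG.
- exact: holo_post.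
exists (fun x => psi (invmx (g : 'M[R[i]]_n) *m (x : 'M[R[i]]_n) : Mx R n)); split.
- by move=> x Gx; apply: psiG; apply: GM => //; exact: GV.
- by apply: holo_pre => // x Gx; apply: GM => //; exact: GV.
- by move=> x Gx /=; rewrite mulKmx // psiphi.
- by move=> x Gx /=; rewrite phipsi ?mulKVmx //; apply: GM => //; exact: GV.
Qed.

Lemma within_comp (T U V : topologicalType) (A : set T) (B : set U)
  (f : T -> U) (h : U -> V) :
  continuous f -> (forall x, A x -> B (f x)) -> {within B, continuous h} ->
  {within A, continuous (h \o f)}.
Proof.
move=> fc fAB /subspace_continuousP hc; apply/subspace_continuousP => x Ax.
apply: cvg_comp (hc _ (fAB _ Ax)).
move=> P /= HP.
have := fc x _ HP; rewrite /within /=.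
move=> H; apply: (@filterS _ (nbhs x) _ _ _ _ H) => y H1 Ay; exact: H1 (fAB _ Ay).
Qed.

Lemma exh_min (R : realType) n (G : set (Mx R n)) (rho : Mx R n -> R) (g : Mx R n) :
  lin_alg_group G -> G g -> exhaustion G rho ->
  exhaustion G (fun x => Order.min (rho x) (rho ((g : 'M[R[i]]_n) *m (x : 'M[R[i]]_n) : Mx R n))).
Proof.
move=> HG Gg [rc [rpos rcomp]].
have gu := unit_of_G HG Gg.
have [_ [_ [GM GV]]] := HG.
split; [|split].
- move=> x; apply: continuous_min; first exact: rc.
  have := @within_comp _ _ _ G G (fun x : Mx R n => ((g : 'M[R[i]]_n) *m (x : 'M[R[i]]_n) : Mx R n)) rho (@Lg_cont R n g).
  by apply => // y Gy; exact: GM.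
- by move=> x Gx; rewrite lt_min rpos //= rpos //; exact: GM.
- move=> c.
  have -> : G `&` [set x | Order.min (rho x) (rho ((g : 'M[R[i]]_n) *m (x : 'M[R[i]]_n) : Mx R n)) <= c] =
     (G `&` [set x | rho x <= c]) `|`
     ((fun x : Mx R n => (invmx (g : 'M[R[i]]_n) *m (x : 'M[R[i]]_n) : Mx R n)) @` (G `&` [set x | rho x <= c])).
    apply/seteqP; split => x /=.
    - move=> [Gx]; rewrite ge_min => /orP[h|h]; first by left.
      right; exists ((g : 'M[R[i]]_n) *m (x : 'M[R[i]]_n) : Mx R n); last by rewrite mulKmx.
      by split => //; exact: GM.
    - move=> [[Gx h]|[y [Gy h] <-]]; first by split => //; rewrite ge_min h.
      split; first by apply: GM => //; exact: GV.
      by rewrite ge_min mulKVmx // h orbT.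
  apply: (compactU (rcomp c)).
  apply: continuous_compact; last exact: rcomp.
  exact/continuous_subspaceT/Lg_cont.
Qed.

Lemma cont_sum (T : topologicalType) (R : realType) (I : Type) (r : seq I)
  (F : I -> T -> CC R) :
  (forall i, continuous (F i)) -> continuous (fun x => \sum_(i <- r) F i x).
Proof.
move=> HF; elim: r => [|a r IH].
  by under eq_fun => x do rewrite big_nil; exact: cst_continuous.
under eq_fun => x do rewrite big_cons.
by move=> x; exact: (continuousD (HF a x) (IH x)).
Qed.

Lemma polyfun_adj (R : realType) n (k j : 'I_n) :
  is_polyfun (fun A : Mx R n => \adj (A : 'M[R[i]]_n) k j).
Proof.
have -> : (fun A : Mx R n => \adj (A : 'M[R[i]]_n) k j) =
  (fun A : Mx R n => (-1) ^+ (j + k) * \det (row' j (col' k (A : 'M[R[i]]_n)))).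
  by apply: funext => A; rewrite mxE.
apply: pf_mul; first exact: pf_cst.
apply: (polyfun_det (M := fun A : Mx R n => row' j (col' k (A : 'M[R[i]]_n)))) => a b.
have -> : (fun A : Mx R n => row' j (col' k (A : 'M[R[i]]_n)) a b) =
  (fun A : Mx R n => (A : 'M[R[i]]_n) (lift j a) (lift k b)).
  by apply: funext => A; rewrite !mxE.
exact: pf_coord.
Qed.

Lemma mu_cont (R : realType) n :
  continuous (fun z : Mx R n * Mx R n => ((z.1 : 'M[R[i]]_n) *m \adj (z.2 : 'M[R[i]]_n) : Mx R n)).
Proof.
move=> z0.
apply: (@mx_cont R _ n n (fun z : Mx R n * Mx R n => ((z.1 : 'M[R[i]]_n) *m \adj (z.2 : 'M[R[i]]_n) : Mx R n)) z0) => i j.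
have -> : (fun y : Mx R n * Mx R n => ((y.1 : 'M[R[i]]_n) *m \adj (y.2 : 'M[R[i]]_n)) i j) =
          (fun y : Mx R n * Mx R n => \sum_k (y.1 : 'M[R[i]]_n) i k * \adj (y.2 : 'M[R[i]]_n) k j).
  by apply: funext => y; rewrite mxE.
move: z0; apply: cont_sum => k z.
apply: continuousM.
- apply: (@continuous_comp _ (Mx R n) (CC R) fst (fun M : Mx R n => (M : 'M[R[i]]_n) i k : CC R) z).
    exact: (@cvg_fst _ _ (nbhs z.1) (nbhs z.2) _).
  exact: coord_continuous.
- apply: (@continuous_comp _ (Mx R n) (CC R) snd (fun M : Mx R n => \adj (M : 'M[R[i]]_n) k j : CC R) z).
    exact: (@cvg_snd _ _ (nbhs z.1) (nbhs z.2) _).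
  exact: (polyfun_cont (@polyfun_adj R n k j)).
Qed.

Lemma exists_g (R : realType) n (G : set (Mx R n)) (rho : Mx R n -> R)
  (E : set (Mx R n)) (c : R) :
  lin_alg_group G -> character_free G -> exhaustion G rho -> tame G E ->
  exists g : Mx R n, G g /\ forall q : Mx R n, G q -> rho q <= c ->
    c < rho ((g : 'M[R[i]]_n) *m (q : 'M[R[i]]_n) : Mx R n).
Proof.
move=> HG Hcf Hrho [Einf [[EG _] Etame]].
have [rc [rpos rcomp]] := Hrho.
have [_ [_ [GM GV]]] := HG.
pose S := G `&` [set x | rho x <= c].
pose mu := fun z : Mx R n * Mx R n => ((z.1 : 'M[R[i]]_n) *m \adj (z.2 : 'M[R[i]]_n) : Mx R n).
pose T := mu @` (S `*` S).
have adjE : forall q, G q -> \adj (q : 'M[R[i]]_n) = invmx q.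
  by move=> q Gq; rewrite /invmx (unit_of_G HG Gq) (det1 HG Hcf Gq) invr1 scale1r.
have TG : T `<=` G.
  move=> _ [[s q] [[Gs _] [Gq _]] <-]; rewrite /mu /= adjE //; apply: GM => //; exact: GV.
have Tc : compact T.
  apply: continuous_compact; first exact/continuous_subspaceT/mu_cont.
  exact: compact_setX (rcomp c) (rcomp c).
have rTc : compact (rho @` T).
  apply: continuous_compact => //; exact: continuous_subspaceW TG rc.
have [M [_ HM]] := compact_bounded rTc.
have HB : forall t, T t -> rho t <= `|M| + 1.
  move=> t Tt.
  have HM1 : M < `|M| + 1 by have := ler_norm M; lra.
  have := HM (`|M| + 1) HM1 (rho t) (ex_intro2 _ _ t Tt erefl).
  by rewrite /=; have := ler_norm (rho t); lra.
have [e Ee] : exists e, E e.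
  apply: contrapT => h; apply: Einf.
  suff -> : E = set0 by exact: finite_set0.
  by apply/seteqP; split => x // Ex; exfalso; apply: h; exists x.
have [phi [[phiG _] Hphi]] := Etame rho (fun _ => `|M| + 2) Hrho
  (fun x _ => ltr_wpDl (normr_ge0 M) (ltr0Sn _ 1)).
have Ge := EG e Ee.
exists (phi e); split; first exact: phiG.
move=> q Gq rq; rewrite ltNge; apply/negP => rgq.
have : T (phi e).
  exists (((phi e : 'M[R[i]]_n) *m (q : 'M[R[i]]_n) : Mx R n), q).
    by split; split => //; apply: GM => //; exact: phiG.
  by rewrite /mu /= adjE // mulmxK //; exact: unit_of_G HG Gq.
move/HB; have := Hphi e Ee; lra.
Qed.

Lemma discrete_sub (R : realType) n (G A B : set (Mx R n)) :
  A `<=` B -> discrete_in G B -> discrete_in G A.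
Proof.
move=> AB [BG HB]; split; first by move=> x /AB /BG.
move=> x Gx; have [U [nU HU]] := HB x Gx; exists U; split => //.
by move=> y [Uy Ay]; apply: HU; split => //; exact: AB.
Qed.

Lemma tame_sub (R : realType) n (G A B : set (Mx R n)) :
  A `<=` B -> ~ finite_set A -> tame G B -> tame G A.
Proof.
move=> AB Ainf [_ [Bd Bt]]; split => //; split; first exact: discrete_sub AB Bd.
move=> rho zeta Hr Hz.
have [phi [bphi Hphi]] := Bt rho (fun x => Order.max (zeta x) 1) Hr
  (fun x _ => ltac:(by rewrite lt_max ltr01 orbT)).
exists phi; split => // x Ax; apply: le_trans (Hphi x (AB x Ax)).
by rewrite le_max lexx.
Qed.

Lemma tame_add (R : realType) n (G E : set (Mx R n)) (p : Mx R n) :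
  lin_alg_group G -> character_free G -> tame G E ->
  discrete_in G (E `|` [set p]) -> tame G (E `|` [set p]).
Proof.
move=> HG Hcf HE Hd; have HE' := HE; case: HE => [Einf [Ed Et]].
split; first by rewrite finite_setU => -[].
split => // rho zeta Hr Hz.
have [g [Gg Hg]] := exists_g (zeta p) HG Hcf Hr HE'.
have [phi [bphi Hphi]] := Et _ zeta (exh_min HG Gg Hr) (fun x Ex => Hz x (or_introl Ex)).
have Gp : G p := Hd.1 p (or_intror erefl).
have bG := bphi.1.
case: (leP (zeta p) (rho (phi p))) => hp.
- exists phi; split => // x [Ex|->] //; apply: le_trans (Hphi x Ex) _.
  by rewrite ge_min lexx.
- exists (fun x => ((g : 'M[R[i]]_n) *m (phi x : 'M[R[i]]_n) : Mx R n)); split.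
    exact: biholo_Lg.
  move=> x [Ex|->].
  + by apply: le_trans (Hphi x Ex) _; rewrite ge_min lexx orbT.
  + exact: ltW (Hg (phi p) (bG p Gp) (ltW hp)).
Qed.

Lemma set_consE (T : eqType) (a : T) (s : seq T) :
  [set` a :: s] = [set a] `|` [set` s].
Proof.
apply/seteqP; split => x /=.
  by rewrite /= in_cons => /orP [/eqP ->|h]; [left|right].
by case => [->|h]; rewrite /= in_cons ?eqxx // h orbT.
Qed.

Lemma tame_addseq (R : realType) n (G D' : set (Mx R n)) (s : seq (Mx R n)) :
  lin_alg_group G -> character_free G -> discrete_in G D' ->
  forall X, tame G X -> X `|` [set` s] `<=` D' -> tame G (X `|` [set` s]).
Proof.
move=> HG Hcf Hd; elim: s => [|a s IH] X HX sub.
  by rewrite set_nil setU0.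
rewrite set_consE setUA; apply: IH; last by rewrite -setUA -set_consE.
apply: tame_add => //; apply: discrete_sub Hd.
by move=> x Hx; apply: sub; rewrite set_consE setUA; left.
Qed.

Lemma one_dir (R : realType) n (G D D' : set (Mx R n)) :
  lin_alg_group G -> character_free G ->
  ~ finite_set D' -> discrete_in G D' ->
  finite_set ((D `\` D') `|` (D' `\` D)) -> tame G D -> tame G D'.
Proof.
move=> HG Hcf D'inf D'd Hfin HD.
have Ffin : finite_set (D' `\` D) by apply: sub_finite_set Hfin => x Hx; right.
have D'E : D' = (D `&` D') `|` (D' `\` D).
  apply/seteqP; split => x.
  - by move=> D'x; case: (pselect (D x)) => Dx; [left|right].
  - by case=> -[].
have Xinf : ~ finite_set (D `&` D').
  by move=> Xf; apply: D'inf; rewrite D'E finite_setU.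
have HX : tame G (D `&` D') by apply: tame_sub HD => // x [].
have [s sE] := (finite_seqP _).1 Ffin.
rewrite D'E sE; apply: (tame_addseq (D' := D')) => //.
by rewrite -sE -D'E.
Qed.


Theorem corollary2p4 (R : realType) (n : nat) (G : set (Mx R n))
    (D D' : set (Mx R n)) :
  lin_alg_group G -> character_free G ->
  ~ finite_set D -> discrete_in G D ->
  ~ finite_set D' -> discrete_in G D' ->
  finite_set ((D `\` D') `|` (D' `\` D)) ->
  (tame G D <-> tame G D').
Proof.
move=> HG Hcf Dinf Dd D'inf D'd Hfin; split.
- exact: one_dir.
- by apply: one_dir => //; rewrite setUC.
Qed.
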